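(* Let $R$ be a commutative ring, $S$ a subring of $R$, $I$ an ideal of $S$, $n\ge1$, $f\in(T_n(R))[x]$ and $1\le i\le j\le n$. [Right] The following are equivalent: (1) $[f(C)]_{ij}\in I$ for all $C\in T_n(S)$; (2) $[f_{ih}(C)]_{hj}\in I$ for all $C\in T_n(S)$ and all $h$ with $i\le h\le j$; (3) $\langle f_{ih},p_{hj}\rangle\in\mathrm{Int}(S^{\ast},I)$ for all $h$ with $i\le h\le j$. [Left] The following are equivalent: (1) $[f(C)_\ell]_{ij}\in I$ for all $C\in T_n(S)$; (2) $[f_{hj}(C)]_{ih}\in I$ for all $C\in T_n(S)$ and all $h$ with $i\le h\le j$; (3) $\langle f_{hj},p_{ih}\rangle\in\mathrm{Int}(S^{\ast},I)$ for all $h$ with $i\le h\le j$.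
   Context: $\mathbb{N}=\{1,2,3,\dots\}$. $T_n(A)$ denotes the ring of upper triangular $n\times n$ matrices over a ring $A$, and $[M]_{ij}$ the $(i,j)$-entry of a matrix $M$. For $f=\sum_k F_kx^k\in(T_n(R))[x]$ with $F_k\in T_n(R)$, right substitution is $f(C)=\sum_kF_kC^k$ and left substitution is $f(C)_\ell=\sum_kC^kF_k$. Writing $f_{ij}^{(k)}=[F_k]_{ij}$, set $f_{ij}=\sum_k f_{ij}^{(k)}x^k\in R[x]$. For $g\in R[x]$, $g(C)$ is the usual evaluation at a matrix. Let $R[X]=R[\{x_{ab}\mid a,b\in\mathbb{N}\}]$. Path polynomials: for $1\le i\le j$ and $k>0$, $p_{ij}^{(k)}=\sum_{i=i_1\le i_2\le\dots\le i_{k+1}=j} x_{i_1i_2}\cdots x_{i_ki_{k+1}}$; for $1\le i\le j$, $p_{ij}^{(0)}=\delta_{ij}$; for $i>j$, $p_{ij}^{(k)}=0$. For $g=\sum_kg_kx^k\in R[x]$, $\langle g,p_{ij}\rangle=\sum_k g_kp_{ij}^{(k)}\in R[X]$. $\mathrm{Int}(S^{\ast},I)$ denotes the set of polynomials in $R[X]$ that take values in $I$ whenever elements of $S$ are substituted (independently) for all the variables. *)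

(* Defs.v *)
From HB Require Import structures.
From mathcomp Require Import all_boot all_order all_algebra.
Set Implicit Arguments. Unset Strict Implicit. Unset Printing Implicit Defensive.
Import Order.TTheory GRing.Theory Num.Theory.
Local Open Scope ring_scope.

Section Defs.
Variable R : comNzRingType.

Definition ideal_of (S I : pred R) : Prop :=
  [/\ {subset I <= S}, 0 \in I,
      {in I &, forall u v, u + v \in I},
      {in I, forall u, - u \in I} &
      {in S & I, forall s u, s * u \in I}].

Definition upper_tri (m : nat) (A : 'M[R]_m) : Prop :=
  forall a b : 'I_m, (b < a)%N -> A a b = 0.

Definition in_Tn (S : pred R) (m : nat) (C : 'M[R]_m) : Prop :=
  upper_tri C /\ forall a b, C a b \in S.

Definition rsubst (m : nat) (f : {poly 'M[R]_m.+1}) (C : 'M[R]_m.+1) :=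
  \sum_(k < size f) f`_k * C ^+ k.

Definition lsubst (m : nat) (f : {poly 'M[R]_m.+1}) (C : 'M[R]_m.+1) :=
  \sum_(k < size f) C ^+ k * f`_k.

Definition entry_poly (m : nat) (f : {poly 'M[R]_m.+1}) (i j : 'I_m.+1)
  : {poly R} := \poly_(k < size f) (f`_k i j).

(* Value of the path polynomial p_{ij}^{(k)} under the assignment
   x_{ab} |-> a b c (variables indexed by nat, i.e. 0-based). *)
Definition path_eval (asg : nat -> nat -> R) (k i j : nat) : R :=
  if k is k'.+1 then
    \sum_(t : k'.+2 .-tuple 'I_j.+1 |
            [&& val (tnth t ord0) == i, val (tnth t ord_max) == j
              & sorted leq (map val t)])
       \prod_(l < k'.+1)
          asg (tnth t (widen_ord (leqnSn _) l)) (tnth t (lift ord0 l))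
  else (i == j)%:R.

Definition pairing_eval (g : {poly R}) (i j : nat) (asg : nat -> nat -> R) : R :=
  \sum_(k < size g) g`_k * path_eval asg k i j.

(* Membership in Int(S^*, I) of a polynomial of R[X], given through its
   evaluation map on assignments of the variables x_{ab}. *)
Definition in_Int (S I : pred R) (P : (nat -> nat -> R) -> R) : Prop :=
  forall asg : nat -> nat -> R, (forall a b, asg a b \in S) -> P asg \in I.

End Defs.

(* Main.v *)
Require Import Defs.
From HB Require Import structures.
From mathcomp Require Import all_boot all_order all_algebra.
Import GRing.Theory.
Set Implicit Arguments. Unset Strict Implicit. Unset Printing Implicit Defensive.
Local Open Scope ring_scope.


Notation tcons x t := (@cons_tuple _ _ x t).

Lemma sum_tuple_cons (R : nmodType) (T : finType) m
  (P : pred (m.+1.-tuple T)) (F : m.+1.-tuple T -> R) :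
  \sum_(t | P t) F t =
  \sum_(x : T) \sum_(t : m.-tuple T | P (tcons x t)) F (tcons x t).
Proof.
rewrite pair_big_dep /=.
rewrite (reindex (fun p : T * m.-tuple T => tcons p.1 p.2)) /=.
  by apply: eq_bigl => -[x t].
exists (fun t => (thead t, [tuple of behead t])) => [[x t] _ | t _] /=.
  by congr (_, _); apply: val_inj.
by case/tupleP: t => x t; apply: val_inj.
Qed.

Lemma sum_tuple_cons2 (R : nmodType) (T : finType) m
  (P : pred (m.+1.-tuple T)) (F : m.+1.-tuple T -> R) :
  \sum_(t | P t) F t =
  \sum_(t : m.-tuple T) \sum_(x : T)
     (if P (tcons x t) then F (tcons x t) else 0).
Proof.
rewrite sum_tuple_cons; under eq_bigr do rewrite big_mkcond.
exact: exchange_big.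
Qed.

Section P.
Variable R : comNzRingType.

Definition pprod (asg : nat -> nat -> R) J k (t : k.+1.-tuple 'I_J) : R :=
  \prod_(l < k) asg (tnth t (widen_ord (leqnSn k) l)) (tnth t (lift ord0 l)).

Definition Qe (asg : nat -> nat -> R) k i j : R :=
  \sum_(t : k.+1 .-tuple 'I_j.+1 |
            [&& val (tnth t ord0) == i, val (tnth t ord_max) == j
              & sorted leq (map val t)]) pprod asg t.

Lemma path_eval_QS asg k i j : path_eval asg k.+1 i j = Qe asg k.+1 i j.
Proof. by []. Qed.
Lemma tnth_cons_max T k (x : T) (t : k.+1.-tuple T) :
  tnth (tcons x t) ord_max = tnth t ord_max.
Proof.
have -> : (ord_max : 'I_k.+2) = lift ord0 (ord_max : 'I_k.+1) by apply: val_inj.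
by rewrite tnthS.
Qed.

Lemma tnth_cons0 T k (x : T) (t : k.+1.-tuple T) :
  tnth (tcons x t) ord0 = x.
Proof. by []. Qed.

Lemma pprod_cons asg J k (x : 'I_J) (t : k.+1.-tuple 'I_J) :
  pprod asg (tcons x t) = asg x (thead t) * pprod asg t.
Proof.
rewrite /pprod big_ord_recl; congr (_ * _).
  have -> : widen_ord (leqnSn k.+1) ord0 = ord0 by apply: val_inj.
  by rewrite tnth0 tnthS.
apply: eq_bigr => l _.
have -> : widen_ord (leqnSn k.+1) (lift ord0 l) = lift ord0 (widen_ord (leqnSn k) l)
  by apply: val_inj.
by rewrite !tnthS.
Qed.

Lemma sorted_cons J k (x : 'I_J) (t : k.+1.-tuple 'I_J) :
  sorted leq (map val (tcons x t)) = (x <= thead t)%N && sorted leq (map val t).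
Proof. by case/tupleP: t => y t. Qed.

Lemma Qe_rec asg k i j :
  Qe asg k.+1 i j = \sum_(l < j.+1 | (i <= l)%N) asg i l * Qe asg k l j.
Proof.
rewrite /Qe sum_tuple_cons2.
under [RHS]eq_bigr => l _ do rewrite mulr_sumr big_mkcond.
rewrite [RHS](exchange_big_dep predT) //.
under [RHS]eq_bigr => t _ do rewrite big_mkcond.
apply: eq_big => // t _.
under [LHS]eq_bigr => x _ do rewrite tnth_cons0 tnth_cons_max sorted_cons pprod_cons.
rewrite -/(thead t).
case Hc: ((val (tnth t ord_max) == j) && sorted leq (map val t)); last first.
  rewrite [LHS]big1; last first.
    by move=> x _; case: ifP => // /andP [_ /andP [h1 /andP [_ h2]]]; rewrite h1 h2 in Hc.
  by rewrite big1 // => l _; rewrite andbF !if_same.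
move/andP: Hc => [h1 h2].
under [LHS]eq_bigr => x _ do rewrite h1 h2 !andbT !andTb.
under [RHS]eq_bigr => x _ do rewrite !andbT.
case: (leqP i (thead t)) => Hit; last first.
  rewrite [LHS]big1; last first.
    move=> x _; case: ifP => // /andP [/eqP hx hle].
    by move: Hit; rewrite -hx ltnNge hle.
  rewrite big1 // => l _; case: ifP => // hl; case: ifP => // /eqP hl2.
  by move: Hit; rewrite hl2 ltnNge hl.
have hij : (i < j.+1)%N by apply: leq_ltn_trans Hit (ltn_ord _).
rewrite [LHS](bigD1 (Ordinal hij)) /= ?eqxx ?Hit // [X in _ + X = _]big1 ?addr0; last first.
  move=> x hx; case: ifP => // /andP [/eqP hx2 _].
  by exfalso; move/eqP: hx; apply; apply: val_inj.
rewrite (bigD1 (thead t)) //= Hit eqxx big1 ?addr0 //.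
move=> l hl; case: ifP => // _; case: ifP => // /eqP hl2.
by exfalso; move/eqP: hl; apply; apply: val_inj.
Qed.

Lemma Qe0 asg i j : Qe asg 0 i j = (i == j)%:R.
Proof.
rewrite /Qe sum_tuple_cons.
under eq_bigr => x _.
  rewrite big_mkcond (big_pred1 [tuple]); last by move=> t; apply/esym/eqP/tuple0.
  over.
have tmax : forall x : 'I_j.+1, tnth (tcons x [tuple]) ord_max = x by [].
have pp : forall x : 'I_j.+1, pprod asg (tcons x [tuple]) = 1.
  by move=> x; rewrite /pprod big_ord0.
under eq_bigr => x _ do rewrite /= tmax pp.
case: (boolP (i == j)) => [/eqP <- | hij].
  have hi : (i < i.+1)%N by [].
  rewrite (bigD1 (Ordinal hi)) //= eqxx big1 ?addr0 // => x hx.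
  case: ifP => // /andP [/eqP hx2 _].
  by exfalso; move/eqP: hx; apply; apply: val_inj.
rewrite big1 // => x _; case: ifP => // /andP [/eqP hx1 /andP [/eqP hx2 _]].
by case/negP: hij; apply/eqP; rewrite -hx1; exact: hx2.
Qed.

Lemma path_eval_Q (asg : nat -> nat -> R) k i j : path_eval asg k i j = Qe asg k i j.
Proof. by case: k => [|k] //; rewrite Qe0. Qed.

Lemma path_eval_rec (asg : nat -> nat -> R) k i j :
  path_eval asg k.+1 i j = \sum_(l < j.+1 | (i <= l)%N) asg i l * path_eval asg k l j.
Proof.
rewrite path_eval_Q Qe_rec; apply: eq_bigr => l _; by rewrite path_eval_Q.
Qed.


Lemma path_eval_gt (asg : nat -> nat -> R) k i j :
  (j < i)%N -> path_eval asg k i j = 0.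
Proof.
move=> hji; case: k => [|k].
  by rewrite /= (gtn_eqF hji).
rewrite path_eval_rec big1 // => l hl.
by exfalso; move: (ltn_ord l); rewrite ltnS => hlj; move: (leq_trans hl hlj); rewrite leqNgt hji.
Qed.

Lemma eq_path_eval (asg1 asg2 : nat -> nat -> R) k i j :
  (forall x y, (i <= x)%N -> (x <= y)%N -> (y <= j)%N -> asg1 x y = asg2 x y) ->
  path_eval asg1 k i j = path_eval asg2 k i j.
Proof.
elim: k i => [|k IH] i H //.
rewrite !path_eval_rec; apply: eq_bigr => l hl.
have hlj : (l <= j)%N by rewrite -ltnS.
rewrite H // (IH l) // => x y hx hxy hy; apply: H => //.
exact: leq_trans hl hx.
Qed.

Definition asgC m (C : 'M[R]_m.+1) : nat -> nat -> R :=
  fun x y => C (inord x) (inord y).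

Lemma mxpow_path m (C : 'M[R]_m.+1) : upper_tri C ->
  forall k (a b : 'I_m.+1), (C ^+ k) a b = path_eval (asgC C) k a b.
Proof.
move=> hC; elim=> [|k IH] a b.
  by rewrite expr0 /= mxE.
rewrite exprS -mulmxE mxE path_eval_rec.
rewrite (big_ord_widen_cond m.+1 (fun l => (a <= l)%N)
   (fun l => asgC C a l * path_eval (asgC C) k l b) (ltn_ord b)).
rewrite [RHS]big_mkcond; apply: eq_bigr => l _.
rewrite IH /asgC !inord_val.
case: ifP => // /negbT; rewrite negb_and -!ltnNge => /orP [hl | hl].
  by rewrite hC // mul0r.
by rewrite path_eval_gt // mulr0.
Qed.

Lemma horner_entry m (C : 'M[R]_m.+1) (p : {poly R}) a b :
  horner_mx C p a b = \sum_(k < size p) p`_k * (C ^+ k) a b.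
Proof.
rewrite -{1}[p]coefK poly_def raddf_sum summxE.
apply: eq_bigr => k _.
by rewrite /= horner_mxZ rmorphXn /= horner_mx_X mxE.
Qed.

Lemma horner_pairing m (C : 'M[R]_m.+1) (p : {poly R}) (a b : 'I_m.+1) :
  upper_tri C -> horner_mx C p a b = pairing_eval p a b (asgC C).
Proof.
move=> hC; rewrite horner_entry /pairing_eval; apply: eq_bigr => k _.
by rewrite mxpow_path.
Qed.

Lemma horner_entry_f m (C : 'M[R]_m.+1) (f : {poly 'M[R]_m.+1}) a b x y :
  horner_mx C (entry_poly f a b) x y = \sum_(k < size f) f`_k a b * (C ^+ k) x y.
Proof.
rewrite horner_entry /entry_poly.
rewrite (big_ord_widen (size f) (fun k => (\poly_(k0 < size f) f`_k0 a b)`_k * (C ^+ k) x y)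
   (size_poly _ _)).
rewrite big_mkcond; apply: eq_bigr => k _.
have e : (\poly_(i < size f) f`_i a b)`_k = f`_k a b by rewrite coef_poly ltn_ord.
rewrite e; case: ifP => // /negbT hk.
by rewrite -e nth_default ?mul0r // leqNgt.
Qed.

Lemma rsubst_sum m (f : {poly 'M[R]_m.+1}) C i j :
  rsubst f C i j = \sum_(h < m.+1) horner_mx C (entry_poly f i h) h j.
Proof.
rewrite /rsubst summxE.
under [RHS]eq_bigr => h _ do rewrite horner_entry_f.
rewrite exchange_big; apply: eq_bigr => k _.
by rewrite -mulmxE mxE.
Qed.

Lemma lsubst_sum m (f : {poly 'M[R]_m.+1}) C i j :
  lsubst f C i j = \sum_(h < m.+1) horner_mx C (entry_poly f h j) i h.
Proof.
rewrite /lsubst summxE.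
under [RHS]eq_bigr => h _ do rewrite horner_entry_f.
rewrite exchange_big; apply: eq_bigr => k _.
by rewrite -mulmxE mxE; apply: eq_bigr => h _; rewrite mulrC.
Qed.

End P.

Unset Implicit Arguments. Set Strict Implicit.

Theorem lemma3p4 (R : comNzRingType) (S I : pred R)
  (hS : subring_closed S) (hI : ideal_of S I)
  (n : nat) (f : {poly 'M[R]_n.+1})
  (hf : forall k, upper_tri f`_k)
  (i j : 'I_n.+1) (hij : (i <= j)%N) :
  [<-> forall C, in_Tn S C -> rsubst f C i j \in I;
       forall C, in_Tn S C -> forall h : 'I_n.+1, (i <= h <= j)%N ->
         horner_mx C (entry_poly f i h) h j \in I;
       forall h : 'I_n.+1, (i <= h <= j)%N ->
         in_Int S I (pairing_eval (entry_poly f i h) h j)]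
  /\
  [<-> forall C, in_Tn S C -> lsubst f C i j \in I;
       forall C, in_Tn S C -> forall h : 'I_n.+1, (i <= h <= j)%N ->
         horner_mx C (entry_poly f h j) i h \in I;
       forall h : 'I_n.+1, (i <= h <= j)%N ->
         in_Int S I (pairing_eval (entry_poly f h j) i h)].
Proof.
case: hI => hIS hI0 hIadd hIneg _.
have hS0 : (0 : R) \in S.
  by case: hS => h1 hB _; rewrite -(subrr 1); exact: (hB 1 1 h1 h1).
have Isum : forall (T : finType) (P : pred T) (F : T -> R),
    (forall h, P h -> F h \in I) -> \sum_(h | P h) F h \in I.
  move=> T P F HF; apply: (big_ind (fun x => x \in I)) => //.
have Isub : forall u v, u \in I -> v \in I -> u - v \in I.
  by move=> u v hu hv; apply: hIadd => //; apply: hIneg.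
have jn : (j < n.+1)%N := ltn_ord j.
split.
- have T_lt : forall C (h : 'I_n.+1), (h < i)%N ->
      horner_mx C (entry_poly f i h) h j = 0.
    by move=> C h hh; rewrite horner_entry_f big1 // => k _; rewrite hf // mul0r.
  have T_gt : forall C, upper_tri C -> forall h : 'I_n.+1, (j < h)%N ->
      horner_mx C (entry_poly f i h) h j = 0.
    move=> C hC h hh; rewrite horner_pairing // /pairing_eval big1 // => k _.
    by rewrite path_eval_gt // mulr0.
  do !apply: AllIffConj.
  + move=> H0 C [hCu hCS] h /andP [hih hhj].
    pose C' x := \matrix_(a, b) (if (x <= a)%N then C a b else 0 : R).
    have C'T : forall x, in_Tn S (C' x).
      move=> x; split => a b; rewrite mxE; case: ifP => // _.
      by move=> hba; apply: hCu.
    pose Phi x := \sum_(h' < n.+1 | (x <= h')%N) horner_mx C (entry_poly f i h') h' j.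
    have Phieq : forall x, (x <= j)%N -> rsubst f (C' x) i j = Phi x.
      move=> x hx; rewrite rsubst_sum /Phi [RHS]big_mkcond; apply: eq_bigr => h' _.
      rewrite !horner_pairing //; last by case: (C'T x).
      rewrite /pairing_eval; case: ifP => hxh.
        apply: eq_bigr => k _; congr (_ * _); apply: eq_path_eval => y z hy hyz hz.
        have hzn : (z < n.+1)%N := leq_ltn_trans hz jn.
        have hyn : (y < n.+1)%N := leq_ltn_trans hyz hzn.
        by rewrite /asgC mxE inordK // (leq_trans hxh hy).
      apply: big1 => -[[|k] hk] _.
        rewrite /= (_ : (h' == j :> nat) = false) ?mulr0 //.
        apply/negbTE; apply: contraFN hxh => /eqP ->; exact: hx.
      rewrite path_eval_rec big1 ?mulr0 // => l _.
      by rewrite /asgC mxE inordK // hxh mul0r.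
    have PhiI : forall x, Phi x \in I.
      move=> x; case: (leqP x j) => hx; first by rewrite -Phieq //; apply: H0.
      rewrite /Phi big1 // => h' hh'; apply: T_gt => //.
      exact: leq_trans hx hh'.
    have Phirec : Phi h = horner_mx C (entry_poly f i h) h j + Phi h.+1.
      rewrite /Phi (bigD1 h) //=; congr (_ + _); apply: eq_bigl => h'.
      by rewrite ltn_neqAle andbC eq_sym.
    have -> : horner_mx C (entry_poly f i h) h j = Phi h - Phi h.+1.
      by rewrite Phirec addrK.
    exact: Isub.
  + move=> H1 h hh asg hasg.
    pose C : 'M[R]_n.+1 := \matrix_(a, b) (if (a <= b)%N then asg a b else 0 : R).
    have CT : in_Tn S C.
      split => a b; rewrite mxE; case: ifP => // hab.
      by move=> hba; move: hab; rewrite leqNgt hba.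
    have := H1 C CT h hh; rewrite horner_pairing; last by case: CT.
    congr (_ \in I); rewrite /pairing_eval; apply: eq_bigr => k _; congr (_ * _).
    apply: eq_path_eval => y z hy hyz hz.
    have hzn : (z < n.+1)%N := leq_ltn_trans hz jn.
    have hyn : (y < n.+1)%N := leq_ltn_trans hyz hzn.
    by rewrite /asgC mxE !inordK // hyz.
  + move=> H2 C [hCu hCS]; rewrite rsubst_sum; apply: Isum => h _.
    case: (leqP i h) => hih; last by rewrite T_lt.
    case: (leqP h j) => hhj; last by rewrite T_gt.
    rewrite horner_pairing //; apply: H2; first by rewrite hih hhj.
    by move=> a b; apply: hCS.
- have T_gt : forall C (h : 'I_n.+1), (j < h)%N ->
      horner_mx C (entry_poly f h j) i h = 0.
    by move=> C h hh; rewrite horner_entry_f big1 // => k _; rewrite hf // mul0r.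
  have T_lt : forall C, upper_tri C -> forall h : 'I_n.+1, (h < i)%N ->
      horner_mx C (entry_poly f h j) i h = 0.
    move=> C hC h hh; rewrite horner_pairing // /pairing_eval big1 // => k _.
    by rewrite path_eval_gt // mulr0.
  do !apply: AllIffConj.
  + move=> H0 C [hCu hCS] h /andP [hih hhj].
    pose C' x := \matrix_(a, b) (if (b <= x)%N then C a b else 0 : R).
    have C'u : forall x, upper_tri (C' x).
      by move=> x a b hba; rewrite mxE hCu // if_same.
    have C'T : forall x, in_Tn S (C' x).
      by move=> x; split => // a b; rewrite mxE; case: ifP.
    pose Psi x := \sum_(h' < n.+1 | (h' < x)%N) horner_mx C (entry_poly f h' j) i h'.
    have Psieq : forall y, (i <= y)%N -> lsubst f (C' y) i j = Psi y.+1.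
      move=> y hy; rewrite lsubst_sum /Psi [RHS]big_mkcond; apply: eq_bigr => h' _.
      rewrite !horner_pairing //.
      rewrite /pairing_eval; case: ifP => hxh.
        apply: eq_bigr => k _; congr (_ * _); apply: eq_path_eval => a b ha hab hb.
        have hbn : (b < n.+1)%N := leq_ltn_trans hb (ltn_ord h').
        by rewrite /asgC mxE inordK // (leq_trans hb hxh).
      apply: big1 => -[[|k] hk] _.
        rewrite /= (_ : (i == h' :> nat) = false) ?mulr0 //.
        apply/negbTE; apply: contraFN hxh => /eqP <-; exact: hy.
      rewrite -mxpow_path // exprSr -mulmxE mxE big1 ?mulr0 // => l _.
      by rewrite mxE -ltnS hxh mulr0.
    have PsiI : forall x, Psi x \in I.
      case=> [|y]; first by rewrite /Psi big_pred0.
      case: (leqP i y) => hy; first by rewrite -Psieq //; apply: H0.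
      rewrite /Psi big1 // => h' hh'; apply: T_lt => //.
      exact: leq_trans hh' hy.
    have Psirec : Psi h.+1 = horner_mx C (entry_poly f h j) i h + Psi h.
      rewrite /Psi (bigD1 h) //=; congr (_ + _); apply: eq_bigl => h'.
      by rewrite ltnS [in RHS]ltn_neqAle andbC.
    have -> : horner_mx C (entry_poly f h j) i h = Psi h.+1 - Psi h.
      by rewrite Psirec addrK.
    exact: Isub.
  + move=> H1 h hh asg hasg.
    pose C : 'M[R]_n.+1 := \matrix_(a, b) (if (a <= b)%N then asg a b else 0 : R).
    have CT : in_Tn S C.
      split => a b; rewrite mxE; case: ifP => // hab.
      by move=> hba; move: hab; rewrite leqNgt hba.
    have := H1 C CT h hh; rewrite horner_pairing; last by case: CT.
    congr (_ \in I); rewrite /pairing_eval; apply: eq_bigr => k _; congr (_ * _).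
    apply: eq_path_eval => y z hy hyz hz.
    have hzn : (z < n.+1)%N := leq_ltn_trans hz (ltn_ord h).
    have hyn : (y < n.+1)%N := leq_ltn_trans hyz hzn.
    by rewrite /asgC mxE !inordK // hyz.
  + move=> H2 C [hCu hCS]; rewrite lsubst_sum; apply: Isum => h _.
    case: (leqP i h) => hih; last by rewrite T_lt.
    case: (leqP h j) => hhj; last by rewrite T_gt.
    rewrite horner_pairing //; apply: H2; first by rewrite hih hhj.
    by move=> a b; apply: hCS.
Qed.
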